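(* Let $q(x,y)=ax^2+bxy+cy^2$ with $a,b,c\in\mathbb{Z}$ be an indefinite binary quadratic form whose discriminant $\Delta(q)=b^2-4ac>0$ is not a perfect square, and let $k\in\mathbb{Z}$. Then the equation $q(x,y)=k$ has at most $4$ solutions $(x,y)\in\mathbb{Z}^2$ satisfying $$|x|\le\frac{|k|^{1/4}}{\sqrt{\Delta(q)}}.$$ *)

(* Defs.v *)
From Stdlib Require Import Reals ZArith List.
Open Scope Z_scope.

Definition qform (a b c x y : Z) : Z := a * x ^ 2 + b * x * y + c * y ^ 2.

Definition qdisc (a b c : Z) : Z := b ^ 2 - 4 * a * c.

Definition is_square (n : Z) : Prop := exists m : Z, n = m * m.

(* |k|^(1/4), written as sqrt (sqrt |k|) (correct also for k = 0). *)
Definition fourth_root (r : R) : R := sqrt (sqrt r).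

(* Main.v *)
Require Import Defs.
From Stdlib Require Import Reals ZArith List Lia Lra.
Open Scope Z_scope.

Lemma core_lt (c k s1 s2 u1 u2 : Z): c<>0 -> 0<=s2 -> s2 < s1 -> s1*s1 <= Z.abs k ->
  u1*u1 = 4*c*k + s1 -> u2*u2 = 4*c*k+s2 -> False.
Proof.
  intros Hc H2 H12 Hk E1 E2.
  assert (Hck : Z.abs (c*k) = Z.abs c * Z.abs k) by apply Z.abs_mul.
  assert (1 <= Z.abs c) by lia.
  destruct (Z_lt_le_dec (c*k) 0) as [Hn|Hp].
  - assert (0 <= u1*u1) by nia.
    assert (s1 >= 4 * Z.abs k) by nia.
    assert (k <> 0) by (intro; subst; lia).
    nia.
  - assert (c*k >= Z.abs k) by nia.
    set (v1 := Z.abs u1). set (v2 := Z.abs u2).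
    assert (V1 : v1*v1 = u1*u1) by (unfold v1; nia).
    assert (V2 : v2*v2 = u2*u2) by (unfold v2; nia).
    assert (0 <= v1) by (unfold v1; lia). assert (0 <= v2) by (unfold v2; lia).
    assert (v2 >= 2*s1) by nia.
    assert (v1 > v2) by nia.
    assert (v1*v1 >= (v2+1)*(v2+1)) by nia.
    nia.
Qed.

Lemma bound_int (x k D : Z) : 0 < D ->
  (Rabs (IZR x) <= fourth_root (Rabs (IZR k)) / sqrt (IZR D))%R ->
  (D*(x*x))*(D*(x*x)) <= Z.abs k.
Proof.
  intros HD H. unfold fourth_root in H.
  assert (HDr : (0 < IZR D)%R) by (apply IZR_lt; lia).
  assert (Hs : (0 < sqrt (IZR D))%R) by (apply sqrt_lt_R0; lra).
  set (K := Rabs (IZR k)) in *.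
  assert (HK : (0 <= K)%R) by apply Rabs_pos.
  set (r := Rabs (IZR x)) in *.
  assert (Hr : (0 <= r)%R) by apply Rabs_pos.
  assert (H1 : (r * sqrt (IZR D) <= sqrt (sqrt K))%R).
  { apply (Rmult_le_compat_r (sqrt (IZR D))) in H; [|lra].
    unfold Rdiv in H. rewrite Rmult_assoc, Rinv_l in H; lra. }
  assert (H2 : ((r * sqrt (IZR D))*(r * sqrt (IZR D)) <= sqrt (sqrt K) * sqrt (sqrt K))%R).
  { apply Rmult_le_compat; try lra; apply Rmult_le_pos; lra. }
  rewrite sqrt_sqrt in H2 by (apply sqrt_pos).
  replace ((r * sqrt (IZR D))*(r * sqrt (IZR D)))%R with (r*r*(sqrt (IZR D)*sqrt (IZR D)))%R in H2 by ring.
  rewrite sqrt_sqrt in H2 by lra.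
  assert (H3 : ((r*r*IZR D)*(r*r*IZR D) <= sqrt K * sqrt K)%R).
  { apply Rmult_le_compat; try lra; apply Rmult_le_pos; try lra; apply Rmult_le_pos; lra. }
  rewrite sqrt_sqrt in H3 by lra.
  assert (Er : (r*r = IZR (x*x))%R).
  { unfold r. rewrite mult_IZR. rewrite <- Rabs_mult. apply Rabs_right.
    rewrite <- mult_IZR. apply Rle_ge, IZR_le. nia. }
  assert (EK : K = IZR (Z.abs k)) by (unfold K; rewrite abs_IZR; reflexivity).
  rewrite Er, EK in H3. rewrite <- !mult_IZR in H3. apply le_IZR in H3. lia.
Qed.

Lemma qid (a b c x y : Z) :
  (2*c*y+b*x)*(2*c*y+b*x) = 4*c*(qform a b c x y) + qdisc a b c * (x*x).
Proof. unfold qform, qdisc. rewrite !Z.pow_2_r. ring. Qed.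

Lemma at_most2 (a b c k : Z) (Hc : c <> 0) : forall (l : list (Z*Z)) x,
  NoDup l -> (forall p, In p l -> fst p = x /\ qform a b c (fst p) (snd p) = k) ->
  (length l <= 2)%nat.
Proof.
  intros l x Hnd H.
  destruct l as [|[x1 y1] [|[x2 y2] [|[x3 y3] l']]]; simpl; try lia.
  exfalso.
  destruct (H (x1,y1)) as [e1 q1]; [simpl; auto|].
  destruct (H (x2,y2)) as [e2 q2]; [simpl; auto|].
  destruct (H (x3,y3)) as [e3 q3]; [simpl; auto|].
  simpl in *. subst x1 x2 x3.
  inversion Hnd as [|? ? N1 Hnd1]; subst.
  inversion Hnd1 as [|? ? N2 _]; subst.
  assert (y1 <> y2) by (intro; subst; apply N1; simpl; auto).
  assert (y1 <> y3) by (intro; subst; apply N1; simpl; auto).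
  assert (y2 <> y3) by (intro; subst; apply N2; simpl; auto).
  unfold qform in *. rewrite !Z.pow_2_r in *.
  assert (E12 : (y1-y2)*(c*(y1+y2)+b*x) = 0) by nia.
  assert (E13 : (y1-y3)*(c*(y1+y3)+b*x) = 0) by nia.
  apply Z.mul_eq_0 in E12. apply Z.mul_eq_0 in E13.
  destruct E12; [lia|]. destruct E13; [lia|].
  assert (Hz : c*(y2-y3) = 0) by lia.
  apply Z.mul_eq_0 in Hz. lia.
Qed.

Theorem lemma2 (a b c k : Z)
  (hpos : (0 < qdisc a b c)%Z) (hnsq : ~ is_square (qdisc a b c)) :
  forall sols : list (Z * Z),
    NoDup sols ->
    (forall p, In p sols ->
       (qform a b c (fst p) (snd p) = k)%Z /\
       (Rabs (IZR (fst p)) <= fourth_root (Rabs (IZR k)) / sqrt (IZR (qdisc a b c)))%R) ->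
    (length sols <= 4)%nat.
Proof.
  intros sols Hnd H.
  assert (Hc : c <> 0).
  { intro; subst. apply hnsq. exists b. unfold qdisc. rewrite Z.pow_2_r. ring. }
  set (D := qdisc a b c) in *.
  assert (Same : forall p1 p2, In p1 sols -> In p2 sols -> fst p1 * fst p1 = fst p2 * fst p2).
  { intros p1 p2 I1 I2.
    destruct (H p1 I1) as [q1 b1]. destruct (H p2 I2) as [q2 b2].
    apply bound_int in b1; [|lia]. apply bound_int in b2; [|lia].
    pose proof (qid a b c (fst p1) (snd p1)) as E1.
    pose proof (qid a b c (fst p2) (snd p2)) as E2.
    rewrite q1 in E1. rewrite q2 in E2. fold D in E1, E2.
    assert (D * (fst p1 * fst p1) = D * (fst p2 * fst p2)).
    { destruct (Z.lt_trichotomy (D * (fst p1 * fst p1)) (D * (fst p2 * fst p2))) as [L|[L|L]]; auto.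
      - exfalso. eapply (core_lt c k); [exact Hc| |exact L|exact b2|exact E2|exact E1]. nia.
      - exfalso. eapply (core_lt c k); [exact Hc| |exact L|exact b1|exact E1|exact E2]. nia. }
    apply Z.mul_reg_l in H0; lia. }
  destruct sols as [|p0 rest] eqn:Es; [simpl; lia|].
  rewrite <- Es in *.
  set (x0 := fst p0).
  set (f := fun p : Z*Z => Z.eqb (fst p) x0).
  rewrite <- (filter_length f sols).
  assert (I0 : In p0 sols) by (rewrite Es; simpl; auto).
  assert (L1 : (length (filter f sols) <= 2)%nat).
  { apply (at_most2 a b c k Hc _ x0); [apply NoDup_filter; auto|].
    intros p Ip. apply filter_In in Ip as [Ip Fp]. unfold f in Fp.
    apply Z.eqb_eq in Fp. split; auto. apply H; auto. }
  assert (L2 : (length (filter (fun p => negb (f p)) sols) <= 2)%nat).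
  { apply (at_most2 a b c k Hc _ (- x0)); [apply NoDup_filter; auto|].
    intros p Ip. apply filter_In in Ip as [Ip Fp]. unfold f in Fp.
    apply Bool.negb_true_iff, Z.eqb_neq in Fp. split; [|apply H; auto].
    pose proof (Same p p0 Ip I0) as S. fold x0 in S.
    assert ((fst p - x0) * (fst p + x0) = 0) by nia.
    apply Z.mul_eq_0 in H0. lia. }
  lia.
Qed.
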